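(* Let $r$ be a positive integer, let $G_r=(V,E)$ be the Chimera graph with $E=E_0\cup E_1\cup E_{01}$, and let $c_{uv}\in\mathbb{R}$ for $(u,v)\in E$ and $d_u\in\mathbb{R}$ for $u\in V$ be arbitrary. Let $H^*=\min_{S\in\{-1,1\}^V}\left(\sum_{(u,v)\in E}c_{uv}S_uS_v+\sum_{u\in V}d_uS_u\right)$, and let $A_0=\sum_{(u,v)\in E_0}|c_{uv}|$ and $A_1=\sum_{(u,v)\in E_1}|c_{uv}|$. Then $H^*\le -(A_0+A_1)$.
   Context: The Chimera graph $G_r=(V,E)$: $V=\{(i,j,k,l)\in\mathbb{Z}^4: 1\le i,j\le r,\ 1\le k\le 4,\ l\in\{0,1\}\}$. $E=E_0\cup E_1\cup E_{01}$ (disjoint), where $E_0$ consists of the edges $\{(i,j,k,0),(i+1,j,k,0)\}$ for $1\le i\le r-1$, $1\le j\le r$, $1\le k\le 4$; $E_1$ consists of the edges $\{(i,j,k,1),(i,j+1,k,1)\}$ for $1\le i\le r$, $1\le j\le r-1$, $1\le k\le 4$; and $E_{01}$ consists of the edges $\{(i,j,k_0,0),(i,j,k_1,1)\}$ for $1\le i,j\le r$, $1\le k_0,k_1\le 4$. *)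

(* Defs.v *)
From mathcomp Require Import all_boot all_order all_algebra.
From mathcomp Require Import reals.
Set Implicit Arguments. Unset Strict Implicit. Unset Printing Implicit Defensive.
Import Order.TTheory GRing.Theory Num.Theory.
Local Open Scope ring_scope.

(* Vertices of the Chimera graph G_r: (i,j,k,l) with indices shifted to start
   at 0: i, j : 'I_r (paper: 1..r), k : 'I_4 (paper: 1..4), l : bool
   (false = 0, true = 1). *)
Definition cvert (r : nat) : finType := ('I_r * 'I_r * 'I_4 * bool)%type.

Definition vi {r} (u : cvert r) : nat := u.1.1.1.
Definition vj {r} (u : cvert r) : nat := u.1.1.2.
Definition vk {r} (u : cvert r) : nat := u.1.2.
Definition vl {r} (u : cvert r) : bool := u.2.

Definition E0 {r} (u v : cvert r) : bool :=
  [&& ~~ vl u, ~~ vl v, vi v == (vi u).+1, vj v == vj u & vk v == vk u].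
Definition E1 {r} (u v : cvert r) : bool :=
  [&& vl u, vl v, vi v == vi u, vj v == (vj u).+1 & vk v == vk u].
Definition E01 {r} (u v : cvert r) : bool :=
  [&& ~~ vl u, vl v, vi v == vi u & vj v == vj u].
Definition Ech {r} (u v : cvert r) : bool := [|| E0 u v, E1 u v | E01 u v].

Definition spin {R : realType} (b : bool) : R := if b then 1 else -1.

(* Each edge is represented by the ordered pair (u,v) as listed in the paper. *)
Definition energy {R : realType} {r} (c : cvert r -> cvert r -> R)
  (d : cvert r -> R) (S : {ffun cvert r -> bool}) : R :=
  \sum_(p : cvert r * cvert r | Ech p.1 p.2) c p.1 p.2 * spin (S p.1) * spin (S p.2)
  + \sum_(u : cvert r) d u * spin (S u).

Definition Hstar {R : realType} {r} (c : cvert r -> cvert r -> R)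
  (d : cvert r -> R) : R :=
  \big[Num.min/energy c d [ffun => true]]_(S : {ffun cvert r -> bool}) energy c d S.

Definition A0 {R : realType} {r} (c : cvert r -> cvert r -> R) : R :=
  \sum_(p : cvert r * cvert r | E0 p.1 p.2) `|c p.1 p.2|.
Definition A1 {R : realType} {r} (c : cvert r -> cvert r -> R) : R :=
  \sum_(p : cvert r * cvert r | E1 p.1 p.2) `|c p.1 p.2|.

(* Main.v *)
Require Import Defs.
From mathcomp Require Import all_boot all_order all_algebra.
From mathcomp Require Import reals.
From mathcomp Require Import ring lra.
Import Order.TTheory GRing.Theory Num.Theory.
Local Open Scope ring_scope.

Section Aux.
Variable R : realType.
Variable n : nat.
Local Notation r := n.+1.
Variable c : cvert r -> cvert r -> R.
Variable d : cvert r -> R.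

Fixpoint f0 (j : 'I_r) (k : 'I_4) (m : nat) : bool :=
  match m with
  | 0 => true
  | m'.+1 => f0 j k m' (+) (0 < c (inord m', j, k, false) (inord m'.+1, j, k, false))
  end.
Fixpoint f1 (i : 'I_r) (k : 'I_4) (m : nat) : bool :=
  match m with
  | 0 => true
  | m'.+1 => f1 i k m' (+) (0 < c (i, inord m', k, true) (i, inord m'.+1, k, true))
  end.

Definition S0 (u : cvert r) : bool :=
  if vl u then f1 u.1.1.1 u.1.2 (vj u) else f0 u.1.1.2 u.1.2 (vi u).

Definition flip (a b : bool) : {ffun cvert r -> bool} :=
  [ffun u => S0 u (+) (if vl u then b else a)].

Lemma spin_edge (x : bool) (e : R) :
  e * spin x * spin (x (+) (0 < e)) = - `|e|.
Proof.
have [he|he] := ltrP 0 e.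
  rewrite gtr0_norm //; case: x => /=; rewrite /spin /=; ring.
rewrite ler0_norm //.
rewrite addbF; case: x; rewrite /spin; ring.
Qed.

Lemma E0_term (p : cvert r * cvert r) : E0 p.1 p.2 ->
  c p.1 p.2 * spin (S0 p.1) * spin (S0 p.2) = - `|c p.1 p.2|.
Proof.
case: p => [[[[i j] k] l] [[[i' j'] k'] l']] /=.
rewrite /E0 /vi /vj /vk /vl /= => /and5P [/negbTE -> /negbTE -> /eqP hi /eqP hj /eqP hk].
have ej : j' = j by apply: val_inj.
have ek : k' = k by apply: val_inj.
subst j' k'.
rewrite /S0 /vl /vi /= hi /=.
have -> : i' = inord i.+1 by apply: val_inj; rewrite /= inordK // -hi.
have -> : (inord i : 'I_r) = i by rewrite inord_val.
exact: spin_edge.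
Qed.

Lemma E1_term (p : cvert r * cvert r) : E1 p.1 p.2 ->
  c p.1 p.2 * spin (S0 p.1) * spin (S0 p.2) = - `|c p.1 p.2|.
Proof.
case: p => [[[[i j] k] l] [[[i' j'] k'] l']] /=.
rewrite /E1 /vi /vj /vk /vl /= => /and5P [-> -> /eqP hi /eqP hj /eqP hk].
have ei : i' = i by apply: val_inj.
have ek : k' = k by apply: val_inj.
subst i' k'.
rewrite /S0 /vl /vj /= hj /=.
have -> : j' = inord j.+1 by apply: val_inj; rewrite /= inordK // -hj.
have -> : (inord j : 'I_r) = j by rewrite inord_val.
exact: spin_edge.
Qed.

Lemma Hstar_le S : Hstar c d <= energy c d S.
Proof.
rewrite /Hstar (bigD1 S) //=; by rewrite ge_min lexx.
Qed.

Lemma sum4 :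
  energy c d (flip false false) + energy c d (flip true true) +
  energy c d (flip false true) + energy c d (flip true false) =
  4 * - (A0 c + A1 c).
Proof.
pose F := fun S (p : cvert r * cvert r) => c p.1 p.2 * spin (S p.1) * spin (S p.2).
pose G := fun S (u : cvert r) => d u * spin (S u).
have e : forall S, energy c d S =
  \sum_(p | Ech p.1 p.2) F S p + \sum_u G S u by [].
rewrite !e.
have HG : \sum_u G (flip false false) u + \sum_u G (flip true true) u +
  \sum_u G (flip false true) u + \sum_u G (flip true false) u = 0 :> R.
  rewrite -!big_split /=; apply: big1 => u _.
  rewrite /G !ffunE; case: (S0 u); case: (vl u); rewrite /spin /=; ring.
have H : forall p : cvert r * cvert r,
  F (flip false false) p + F (flip true true) p + F (flip false true) p
  + F (flip true false) p =
  (if vl p.1 == vl p.2 then 4 * (c p.1 p.2 * spin (S0 p.1) * spin (S0 p.2)) else 0).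
  move=> p; rewrite /F !ffunE.
  case: (S0 p.1); case: (S0 p.2); case: (vl p.1); case: (vl p.2);
  rewrite /spin /=; ring.
have HF : \sum_(p | Ech p.1 p.2) F (flip false false) p +
  \sum_(p | Ech p.1 p.2) F (flip true true) p +
  \sum_(p | Ech p.1 p.2) F (flip false true) p +
  \sum_(p | Ech p.1 p.2) F (flip true false) p =
  \sum_(p | Ech p.1 p.2)
  (if vl p.1 == vl p.2 then 4 * (c p.1 p.2 * spin (S0 p.1) * spin (S0 p.2)) else 0).
  by rewrite -(eq_bigr _ (fun p _ => H p)) !big_split.
have HA : \sum_(p | Ech p.1 p.2)
  (if vl p.1 == vl p.2 then 4 * (c p.1 p.2 * spin (S0 p.1) * spin (S0 p.2)) else 0)
  = 4 * - (A0 c + A1 c).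
  transitivity (\sum_(p | E0 p.1 p.2) 4 * (c p.1 p.2 * spin (S0 p.1) * spin (S0 p.2))
    + \sum_(p | E1 p.1 p.2) 4 * (c p.1 p.2 * spin (S0 p.1) * spin (S0 p.2))).
    rewrite big_mkcond [in RHS]big_mkcond [X in _ + X]big_mkcond -big_split /=.
    apply: eq_bigr => -[u v] _ /=.
    rewrite /Ech /E0 /E1 /E01.
    case: (vl u); case: (vl v) => /=.
    all: rewrite ?orbF ?add0r ?addr0 //.
    by case: ifP.
  rewrite (eq_bigr (fun p => 4 * - `|c p.1 p.2|)); last by move=> p /E0_term ->.
  rewrite [X in _ + X](eq_bigr (fun p => 4 * - `|c p.1 p.2|)); last by move=> p /E1_term ->.
  rewrite -!mulr_sumr !sumrN /A0 /A1; ring.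
lra.
Qed.

Lemma main : Hstar c d <= - (A0 c + A1 c).
Proof.
have := sum4.
have h1 := Hstar_le (flip false false).
have h2 := Hstar_le (flip true true).
have h3 := Hstar_le (flip false true).
have h4 := Hstar_le (flip true false).
lra.
Qed.
End Aux.

Theorem lemma1 (R : realType) (r : nat) (hr : (0 < r)%N)
  (c : cvert r -> cvert r -> R) (d : cvert r -> R) :
  Hstar c d <= - (A0 c + A1 c).
Proof.
case: r hr c d => // n _ c d; exact: main.
Qed.
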